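(* Let $\mathcal{B}$ be a set of data expressions closed under taking sub-expressions, and let $N$ be such that $1\le\mathrm{Card}(\mathcal{B})<N$. Then for every type $\sigma$ with $\mathrm{depth}(\sigma)\le K$ in which exactly $L$ sorts occur (counted with repetitions): $\mathrm{Card}([\![\sigma]\!])<\exp_2^K(N^L)$. Moreover, for $e,u\in[\![\sigma]\!]$, testing whether $e\sqsupseteq u$ takes at most $\exp_2^K(N^{(L+1)^3})$ comparisons between elements of $\mathcal{B}$.
   Context: Types are built from a finite set of sorts by $\sigma ::= \iota \mid \sigma\times\tau \mid \sigma\Rightarrow\tau$. Arrow depth: $\mathrm{depth}(\iota)=0$, $\mathrm{depth}(\sigma\times\tau)=\max(\mathrm{depth}(\sigma),\mathrm{depth}(\tau))$, $\mathrm{depth}(\sigma\Rightarrow\tau)=1+\max(\mathrm{depth}(\sigma),\mathrm{depth}(\tau))$. Data expressions are built from data constructors (each with a type $\kappa_1\Rightarrow\cdots\Rightarrow\kappa_m\Rightarrow\iota$, $\iota$ a sort, arguments of type order $0$, i.e. built only from sorts and products) as $d ::= c\,d_1\cdots d_m \mid (d,d')$, fully applied and well-typed. $\exp_2^0(n)=n$, $\exp_2^{K+1}(n)=2^{\exp_2^K(n)}$. Non-deterministic extensional values: $[\![\iota]\!]=\{d\in\mathcal{B}\mid d:\iota\}$ for sorts $\iota$; $[\![\sigma\times\tau]\!]=[\![\sigma]\!]\times[\![\tau]\!]$; $[\![\sigma\Rightarrow\tau]\!]=\{A_{\sigma\Rightarrow\tau}\mid A\subseteq[\![\sigma]\!]\times[\![\tau]\!]\}$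 (arbitrary relations, tagged with their type). The relation $\sqsupseteq$ on extensional values of the same type: $d\sqsupseteq b$ iff $d=b$ for elements of a sort; $(e_1,e_2)\sqsupseteq(u_1,u_2)$ iff $e_1\sqsupseteq u_1$ and $e_2\sqsupseteq u_2$; $A_\sigma\sqsupseteq B_\sigma$ for functional $\sigma$ iff for every $(e,u)\in B$ there is $u'\sqsupseteq u$ with $(e,u')\in A$. *)

(* Defs.v *)
From Stdlib Require List.
From mathcomp Require Import all_boot.
Set Implicit Arguments.
Unset Strict Implicit.
Unset Printing Implicit Defensive.

Inductive ty (S : Type) : Type :=
| TSort of S
| TProd of ty S & ty S
| TArr of ty S & ty S.
Arguments TSort {S}.
Arguments TProd {S}.
Arguments TArr {S}.

Fixpoint depth {S} (t : ty S) : nat :=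
  match t with
  | TSort _ => 0
  | TProd a b => maxn (depth a) (depth b)
  | TArr a b => (maxn (depth a) (depth b)).+1
  end.

Fixpoint nsorts {S} (t : ty S) : nat :=
  match t with
  | TSort _ => 1
  | TProd a b => nsorts a + nsorts b
  | TArr a b => nsorts a + nsorts b
  end.

Fixpoint exp2 (K n : nat) : nat :=
  match K with
  | 0 => n
  | K'.+1 => 2 ^ exp2 K' n
  end.

Inductive dexp (C : Type) : Type :=
| DCon of C & seq (dexp C)
| DPair of dexp C & dexp C.
Arguments DCon {C}.
Arguments DPair {C}.

Inductive isub {C} : dexp C -> dexp C -> Prop :=
| isub_con c ds d : List.In d ds -> isub d (DCon c ds)
| isub_pairl d1 d2 : isub d1 (DPair d1 d2)
| isub_pairr d1 d2 : isub d2 (DPair d1 d2).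

Section Typing.
Variables (S : eqType) (C : Type).
(* a constructor c has type  cargs c_1 => ... => cargs c_m => cres c *)
Variables (cargs : C -> seq (ty S)) (cres : C -> S).

Fixpoint wt (d : dexp C) (t : ty S) {struct d} : bool :=
  match d, t with
  | DCon c ds, TSort s =>
      (cres c == s) &&
      (fix go (ds : seq (dexp C)) (ts : seq (ty S)) {struct ds} : bool :=
         match ds, ts with
         | [::], [::] => true
         | d :: ds', k :: ts' => wt d k && go ds' ts'
         | _, _ => false
         end) ds (cargs c)
  | DPair d1 d2, TProd a b => wt d1 a && wt d2 b
  | _, _ => false
  end.
End Typing.

Section Semantics.
Variables (S : finType) (C : Type).
Variables (cargs : C -> seq (ty S)) (cres : C -> S).
(* The finite set B of data expressions is given as a finite type Bt
   together with an (injective) embedding bval into data expressions. *)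
Variables (Bt : finType) (bval : Bt -> dexp C).

(* [[sigma]] : [[iota]] = {d in B | d : iota}, products, and relations
   (subsets of [[sigma]] x [[tau]]); the type tag is the Rocq type. *)
Fixpoint sem (t : ty S) : finType :=
  match t with
  | TSort s => {b : Bt | wt cargs cres (bval b) (TSort s)}
  | TProd a b => (sem a * sem b)%type
  | TArr a b => {set (sem a * sem b)}
  end.

Fixpoint sqge (t : ty S) : sem t -> sem t -> Prop :=
  match t return sem t -> sem t -> Prop with
  | TSort s => fun d b => d = b
  | TProd a b => fun e u => @sqge a e.1 u.1 /\ @sqge b e.2 u.2
  | TArr a b => fun A B =>
      forall p, p \in B -> exists2 u', @sqge b u' p.2 & (p.1, u') \in A
  end.

(* Instrumented decision procedures: result together with the number of
   comparisons between elements of B performed (exhaustive evaluation). *)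
Definition andc (x y : bool * nat) : bool * nat := (x.1 && y.1, x.2 + y.2).
Definition orc (x y : bool * nat) : bool * nat := (x.1 || y.1, x.2 + y.2).

Fixpoint eqc (t : ty S) : sem t -> sem t -> bool * nat :=
  match t return sem t -> sem t -> bool * nat with
  | TSort s => fun x y => (val x == val y, 1)
  | TProd a b => fun x y => andc (@eqc a x.1 y.1) (@eqc b x.2 y.2)
  | TArr a b => fun A B =>
      let pairc (x y : sem a * sem b) := andc (@eqc a x.1 y.1) (@eqc b x.2 y.2) in
      let memc x (Y : {set (sem a * sem b)}) :=
        foldr (fun y acc => orc (pairc x y) acc) (false, 0) (enum Y) in
      let subc (X Y : {set (sem a * sem b)}) :=
        foldr (fun x acc => andc (memc x Y) acc) (true, 0) (enum X) in
      andc (subc A B) (subc B A)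
  end.

Fixpoint geqc (t : ty S) : sem t -> sem t -> bool * nat :=
  match t return sem t -> sem t -> bool * nat with
  | TSort s => fun x y => (val x == val y, 1)
  | TProd a b => fun x y => andc (@geqc a x.1 y.1) (@geqc b x.2 y.2)
  | TArr a b => fun A B =>
      foldr (fun p acc =>
        andc (foldr (fun q acc' =>
                 orc (andc (@eqc a q.1 p.1) (@geqc b q.2 p.2)) acc')
               (false, 0) (enum A)) acc)
        (true, 0) (enum B)
  end.
End Semantics.

(* Main.v *)
Require Import Defs.
From mathcomp Require Import all_boot zify.

Lemma foldr_andc T (f : T -> bool * nat) s :
  foldr (fun x acc => andc (f x) acc) (true, 0) s = (all (fun x => (f x).1) s, \sum_(x <- s) (f x).2).
Proof. elim: s => [|x s IH] /=; first by rewrite big_nil. by rewrite IH big_cons. Qed.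

Lemma foldr_orc T (f : T -> bool * nat) s :
  foldr (fun x acc => orc (f x) acc) (false, 0) s = (has (fun x => (f x).1) s, \sum_(x <- s) (f x).2).
Proof. elim: s => [|x s IH] /=; first by rewrite big_nil. by rewrite IH big_cons. Qed.

Lemma sum_bound T (s : seq T) (g : T -> nat) M : (forall x, g x <= M) -> \sum_(x <- s) g x <= size s * M.
Proof. move=> h; elim: s => [|x s IH]; first by rewrite big_nil. by rewrite big_cons /= mulSn leq_add. Qed.


Lemma exp2_ge K n : n <= exp2 K n.
Proof. elim: K => //= K IH; apply: leq_trans IH (ltnW (ltn_expl _ _)). by []. Qed.

Lemma exp2_mono K m n : m <= n -> exp2 K m <= exp2 K n.
Proof. elim: K m n => //= K IH m n h; apply: leq_pexp2l => //; exact: IH. Qed.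

Lemma exp2_monoK K K' n : K <= K' -> exp2 K n <= exp2 K' n.
Proof.
move/subnK <-; elim: (K' - K) => // d IH; rewrite addSn /=.
exact: leq_trans IH (ltnW (ltn_expl _ _)).
Qed.

Lemma exp2_mul K x y : 1 < x -> 1 < y -> exp2 K x * exp2 K y <= exp2 K (x * y).
Proof.
move=> hx hy; elim: K => //= K IH; rewrite -expnD; apply: leq_pexp2l => //.
apply: leq_trans IH.
have := leq_trans hx (exp2_ge K x); have := leq_trans hy (exp2_ge K y).
move: (exp2 K x) (exp2 K y) => X Y; nia.
Qed.

Lemma exp2_mulb K {a b x y} : a <= exp2 K x -> b <= exp2 K y -> 1 < x -> 1 < y -> a * b <= exp2 K (x * y).
Proof. move=> ha hb hx hy; apply: leq_trans (@exp2_mul K x y hx hy); exact: leq_mul. Qed.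

Lemma poly_ineq L : 0 < L -> L ^ 3 + 2 * L + 2 <= (L + 1) ^ 3.
Proof. move=> h; rewrite !expnS expn0; nia. Qed.

Lemma ineq_main K N L X Q P :
  1 < N -> 0 < L -> X <= exp2 K (N ^ L) -> Q <= exp2 K (N ^ (L ^ 3)) ->
  P <= 2 * X * X * (2 * Q) ->
  P <= exp2 K (N ^ ((L + 1) ^ 3)).
Proof.
move=> hN hL hX hQ hP.
have h2 : 2 <= exp2 K 2 by apply: exp2_ge.
have n1 : forall m, 1 < N ^ m.+1 by move=> m; apply: (@leq_trans N) => //; rewrite -{1}(expn1 N); apply: leq_pexp2l; lia.
have nL : 1 < N ^ L by clear -n1 hL; case: L hL => // L _; apply: n1.
have nL3 : 1 < N ^ (L ^ 3) by clear -n1 hL; case: L hL => // L _; rewrite expnS mulSn; apply: n1.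
apply: (leq_trans hP).
have m2 : 1 < 2 * 2 by [].
have e1 := exp2_mulb K h2 h2 (leqnn 2) (leqnn 2).
have e2 := exp2_mulb K e1 hX m2 nL.
have e3 := exp2_mulb K e2 hX ltac:(nia) nL.
have e4 := exp2_mulb K e3 hQ ltac:(nia) nL3.
apply: leq_trans (leq_trans _ e4) _; first nia.
apply: exp2_mono.
apply: (@leq_trans (N ^ 2 * N ^ L * N ^ L * N ^ (L ^ 3))).
  rewrite !leq_mul //; nia.
rewrite -!expnD; apply: leq_pexp2l; first lia.
have := poly_ineq L hL; lia.
Qed.

Lemma card_setT (T : finType) : #|{set T}| = 2 ^ #|T|.
Proof.
have e : powerset [set: T] = [set: {set T}] by apply/setP => A; rewrite powersetE in_setT subsetT.
by rewrite -[LHS]cardsT -e card_powerset cardsT.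
Qed.

Lemma cube_mono m n : m <= n -> m ^ 3 <= n ^ 3.
Proof. move=> h; rewrite !expnS expn0 !muln1; apply: leq_mul => //; exact: leq_mul. Qed.

Lemma nsorts_gt0 {S} (t : ty S) : 0 < nsorts t.
Proof. elim: t => //= a ha b hb; lia. Qed.

Lemma nested_cnt {T} (s1 s2 : seq T) (f : T -> T -> bool * nat) {M} :
  (forall x y, (f x y).2 <= M) ->
  (foldr (fun x acc => andc (foldr (fun y acc' => orc (f x y) acc') (false, 0) s2) acc) (true, 0) s1).2
   <= size s1 * (size s2 * M).
Proof.
move=> h; rewrite foldr_andc /=; apply: sum_bound => x.
rewrite foldr_orc /=; exact: sum_bound.
Qed.

Section Sem.
Variables (S : finType) (C : Type) (cargs : C -> seq (ty S)) (cres : C -> S) (Bt : finType) (bval : Bt -> dexp C).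

Lemma corr t : (forall e u : sem cargs cres bval t, (eqc e u).1 = (e == u)) /\
               (forall e u : sem cargs cres bval t, (geqc e u).1 <-> sqge e u).
Proof.
elim: t => [s|a [IHa IHa'] b [IHb IHb']|a [IHa IHa'] b [IHb IHb']].
- split=> e u /=; first by rewrite val_eqE.
  by rewrite val_eqE; split => /eqP.
- split=> e u /=.
  by rewrite IHa IHb.
  split => [/andP [/IHa' h1 /IHb' h2] | [/IHa' h1 /IHb' h2]]; [by [] | by rewrite h1 h2].
- split=> A B /=.
  rewrite !foldr_andc /=.
  have pe : forall x y : sem cargs cres bval a * sem cargs cres bval b,
      (x.1 == y.1) && (x.2 == y.2) = (x == y) by [].
  apply/idP/idP.
    move=> /andP [/allP h1 /allP h2]; rewrite eqEsubset; apply/andP; split;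
      apply/subsetP => x xA.
      have := h1 x; rewrite mem_enum xA foldr_orc /= => /(_ isT) /hasP [y].
      by rewrite mem_enum IHa IHb pe => yB /eqP ->.
    have := h2 x; rewrite mem_enum xA foldr_orc /= => /(_ isT) /hasP [y].
    by rewrite mem_enum IHa IHb pe => yB /eqP ->.
  move/eqP ->; rewrite andbb; apply/allP => x xB; rewrite foldr_orc /=.
  apply/hasP; exists x => //.
  by rewrite IHa IHb !eqxx.
  rewrite foldr_andc /=.
  split.
    move/allP => h p pB; have := h p; rewrite mem_enum pB foldr_orc /= => /(_ isT) /hasP [q].
    rewrite mem_enum IHa => qA /andP [/eqP e1 /IHb' h2]; exists q.2 => //.
    by rewrite -e1 -surjective_pairing.
  move=> h; apply/allP => p; rewrite mem_enum => /h [u' h1 h2].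
  rewrite foldr_orc /=; apply/hasP; exists (p.1, u'); first by rewrite mem_enum.
  by rewrite IHa eqxx /=; apply/IHb'.
Qed.

Lemma cnt N (hN : 1 < N) (HB : #|Bt| < N) t : forall K, depth t <= K ->
  [/\ #|sem cargs cres bval t| < exp2 K (N ^ nsorts t),
      forall e u : sem cargs cres bval t, (eqc e u).2 <= exp2 K (N ^ ((nsorts t + 1) ^ 3)) &
      forall e u : sem cargs cres bval t, (geqc e u).2 <= exp2 K (N ^ ((nsorts t + 1) ^ 3))].
Proof.
have n1 : forall m, 1 < N ^ m.+1.
  by move=> m; apply: (@leq_trans N) => //; rewrite -{1}(expn1 N); apply: leq_pexp2l; lia.
elim: t => [s|a IHa b IHb|a IHa b IHb] K /= hK.
- have h1 : 1 <= exp2 K (N ^ ((1 + 1) ^ 3)).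
    by apply: leq_trans (exp2_ge _ _); apply: ltnW; apply: n1.
  split => [|e u|e u] //.
  apply: leq_trans (exp2_ge _ _); rewrite expn1.
  exact: leq_ltn_trans (leq_card _ val_inj) HB.
- have [ka kb] : depth a <= K /\ depth b <= K by move: hK; rewrite geq_max => /andP.
  have [ca Ea Ga] := IHa K ka; have [cb Eb Gb] := IHb K kb.
  have la := nsorts_gt0 a; have lb := nsorts_gt0 b.
  have nX : forall m, 0 < m -> 1 < N ^ m by case=> // m _; apply: n1.
  have ha3 : (nsorts a + 1) ^ 3 <= (nsorts a + nsorts b) ^ 3 by apply: cube_mono; lia.
  have hb3 : (nsorts b + 1) ^ 3 <= (nsorts a + nsorts b) ^ 3 by apply: cube_mono; lia.
  have QB : forall m, m <= (nsorts a + nsorts b) ^ 3 ->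
      exp2 K (N ^ m) <= exp2 K (N ^ ((nsorts a + nsorts b) ^ 3)).
    by move=> m hm; apply: exp2_mono; apply: leq_pexp2l => //; lia.
  have X1 : 1 <= exp2 K (N ^ (nsorts a + nsorts b)).
    by apply: leq_trans (exp2_ge _ _); apply: ltnW; apply: nX; lia.
  have fin : forall P, P <= 2 * exp2 K (N ^ ((nsorts a + nsorts b) ^ 3)) ->
      P <= exp2 K (N ^ ((nsorts a + nsorts b + 1) ^ 3)).
    move=> P hP; apply: (ineq_main K N (nsorts a + nsorts b) (exp2 K (N ^ (nsorts a + nsorts b)))
       (exp2 K (N ^ ((nsorts a + nsorts b) ^ 3)))) => //; first lia.
    apply: leq_trans hP _; move: X1; move: (exp2 K (N ^ (nsorts a + nsorts b))) => X.
    move: (exp2 K _) => Q X1; by apply: leq_pmull; rewrite !muln_gt0 X1.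
  split => [|e u|e u].
  + rewrite card_prod; apply: (leq_trans (ltn_mul ca cb)); rewrite expnD.
    by apply: exp2_mul; apply: nX.
  + apply: fin; rewrite mul2n -addnn leq_add //.
      exact: leq_trans (Ea _ _) (QB _ ha3).
    exact: leq_trans (Eb _ _) (QB _ hb3).
  + apply: fin; rewrite mul2n -addnn leq_add //.
      exact: leq_trans (Ga _ _) (QB _ ha3).
    exact: leq_trans (Gb _ _) (QB _ hb3).
- case: K hK => // K hK.
  have [ka kb] : depth a <= K /\ depth b <= K by move: hK; rewrite ltnS geq_max => /andP.
  have [ca Ea Ga] := IHa K ka; have [cb Eb Gb] := IHb K kb.
  have la := nsorts_gt0 a; have lb := nsorts_gt0 b.
  have nX : forall m, 0 < m -> 1 < N ^ m by case=> // m _; apply: n1.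
  have ha3 : (nsorts a + 1) ^ 3 <= (nsorts a + nsorts b) ^ 3 by apply: cube_mono; lia.
  have hb3 : (nsorts b + 1) ^ 3 <= (nsorts a + nsorts b) ^ 3 by apply: cube_mono; lia.
  have QB : forall m, m <= (nsorts a + nsorts b) ^ 3 ->
      exp2 K (N ^ m) <= exp2 K (N ^ ((nsorts a + nsorts b) ^ 3)).
    by move=> m hm; apply: exp2_mono; apply: leq_pexp2l => //; lia.
  have cP : #|sem cargs cres bval (TProd a b)| < exp2 K (N ^ (nsorts a + nsorts b)).
    rewrite card_prod; apply: (leq_trans (ltn_mul ca cb)); rewrite expnD.
    by apply: exp2_mul; apply: nX.
  have cT : #|sem cargs cres bval (TArr a b)| < exp2 K.+1 (N ^ (nsorts a + nsorts b)).
    by rewrite /= card_setT ltn_exp2l.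
  set X := exp2 K (N ^ (nsorts a + nsorts b)) in cP *.
  have hX : X <= exp2 K (N ^ (nsorts a + nsorts b)) by [].
  clearbody X.
  have fin : forall P, P <= 2 * X * X * (2 * exp2 K (N ^ ((nsorts a + nsorts b) ^ 3))) ->
      P <= exp2 K.+1 (N ^ ((nsorts a + nsorts b + 1) ^ 3)).
    move=> P hP; apply: leq_trans (exp2_monoK _ _ _ (leqnSn K)).
    apply: (ineq_main K N (nsorts a + nsorts b) X
       (exp2 K (N ^ ((nsorts a + nsorts b) ^ 3)))) => //; lia.
  clear hX.
  have hA : forall A : {set (sem cargs cres bval a * sem cargs cres bval b)}, size (enum A) <= X.
    move=> A; rewrite -cardE; apply: (leq_trans (max_card _)). exact (ltnW cP).
  move: (exp2 K (N ^ ((nsorts a + nsorts b) ^ 3))) QB fin => Q QB fin.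
  have E2 : forall x y : sem cargs cres bval a * sem cargs cres bval b,
      (andc (eqc x.1 y.1) (eqc x.2 y.2)).2 <= 2 * Q.
    move=> x y /=; rewrite mul2n -addnn leq_add //.
      exact: leq_trans (Ea _ _) (QB _ ha3).
    exact: leq_trans (Eb _ _) (QB _ hb3).
  have G2 : forall x y : sem cargs cres bval a * sem cargs cres bval b,
      (andc (eqc y.1 x.1) (geqc y.2 x.2)).2 <= 2 * Q.
    move=> x y /=; rewrite mul2n -addnn leq_add //.
      exact: leq_trans (Ea _ _) (QB _ ha3).
    exact: leq_trans (Gb _ _) (QB _ hb3).
  have eqX : 2 * X * X * (2 * Q) = X * (X * (2 * Q)) + X * (X * (2 * Q)) by nia.
  split => [|A B|A B].
  + exact: cT.
  + apply: fin; rewrite eqX /=.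
    apply: leq_add.
      apply: leq_trans (nested_cnt (enum A) (enum B) (fun x y : sem cargs cres bval a * sem cargs cres bval b => andc (eqc x.1 y.1) (eqc x.2 y.2)) E2) _.
      by apply: leq_mul (hA A) (leq_mul (hA B) (leqnn _)).
    apply: leq_trans (nested_cnt (enum B) (enum A) (fun x y : sem cargs cres bval a * sem cargs cres bval b => andc (eqc x.1 y.1) (eqc x.2 y.2)) E2) _.
    by apply: leq_mul (hA B) (leq_mul (hA A) (leqnn _)).
  + apply: fin; rewrite eqX /=.
    apply: leq_trans (leq_addr _ _).
    apply: leq_trans (nested_cnt (enum B) (enum A) (fun x y : sem cargs cres bval a * sem cargs cres bval b => andc (eqc y.1 x.1) (geqc y.2 x.2)) G2) _.
    by apply: leq_mul (hA B) (leq_mul (hA A) (leqnn _)).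

Qed.
End Sem.
Theorem lemma12 (S : finType) (C : Type)
  (cargs : C -> seq (ty S)) (cres : C -> S)
  (Hord : forall c, all (fun k => depth k == 0) (cargs c))
  (Bt : finType) (bval : Bt -> dexp C)
  (Hinj : injective bval)
  (Hwt : forall b, exists t, wt cargs cres (bval b) t)
  (Hsub : forall (b : Bt) (d : dexp C), isub d (bval b) -> exists b', bval b' = d)
  (N : nat) (HN : 1 <= #|Bt| < N)
  (K L : nat) (t : ty S) (Hdepth : depth t <= K) (HL : nsorts t = L) :
  #|sem cargs cres bval t| < exp2 K (N ^ L) /\
  (forall e u : sem cargs cres bval t,
     ((geqc e u).1 <-> sqge e u) /\
     (geqc e u).2 <= exp2 K (N ^ ((L + 1) ^ 3))).
Proof.
move: HN => /andP [h1 hB].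
have hN : 1 < N by apply: leq_ltn_trans h1 hB.
subst L.
have [c1 c2 c3] := @cnt _ _ cargs cres _ bval _ hN hB t K Hdepth.
split => // e u; split; last exact: c3.
by have [_ ->] := @corr _ _ cargs cres _ bval t.
Qed.
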